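(* Let $\mathcal I'$ be an SMI instance, $a^*$ an agent, and let $\mathcal I^{a^*}$ be the instance arising from $\mathcal I'$ by replacing the preference list of $a^*$ by an arbitrary strict order over an arbitrary set of agents of the opposite gender (reordering and extending it arbitrarily). Then there is at most one man $m$ and at most one woman $w$ such that $m,w\notin\mathrm{ma}(\mathcal I')$ and $m,w\in\mathrm{ma}(\mathcal I^{a^*})$.
   Context: In a Stable Marriage with Incomplete Lists (SMI) instance there are men $U$ and women $W$, and each agent has a strict preference list over a subset of the agents of opposite gender; $m,w$ are mutually acceptable if each appears in the other's list. A matching is a set of mutually acceptable man–woman pairs in which each agent appears at most once. A mutually acceptable pair $\{m,w\}$ blocks a matching $M$ if ($m$ is unassigned or prefers $w$ to his partner) and ($w$ is unassigned or prefers $m$ to her partner); $M$ is stable if no pair blocks it. By the Rural Hospitals Theorem all stable matchings of an SMI instance assign the same set of agents; $\mathrm{ma}(\mathcal I)$ denotes this set of agents matched in the stable matchings of $\mathcal I$. *)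

(* Defs.v *)
From mathcomp Require Import all_boot.
Set Implicit Arguments. Unset Strict Implicit. Unset Printing Implicit Defensive.

(* An SMI instance with men U and women W: each agent has a strict preference
   list (a duplicate-free sequence, most preferred first) over a subset of the
   agents of the opposite gender. *)
Record SMI (U W : finType) := mkSMI {
  prefU : U -> seq W;
  prefW : W -> seq U
}.

Section SMIdefs.
Variables (U W : finType) (I : SMI U W).

Definition wf_SMI : Prop :=
  (forall m, uniq (prefU I m)) /\ (forall w, uniq (prefW I w)).

Definition acceptable (m : U) (w : W) : bool :=
  (w \in prefU I m) && (m \in prefW I w).

Definition man_prefers (m : U) (w w' : W) : bool :=
  (w \in prefU I m) && (index w (prefU I m) < index w' (prefU I m)).
Definition woman_prefers (w : W) (m m' : U) : bool :=
  (m \in prefW I w) && (index m (prefW I w) < index m' (prefW I w)).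

Definition is_matching (M : {set U * W}) : Prop :=
  [/\ forall p, p \in M -> acceptable p.1 p.2,
      forall m w w', (m, w) \in M -> (m, w') \in M -> w = w'
    & forall m m' w, (m, w) \in M -> (m', w) \in M -> m = m'].

Definition man_matched (M : {set U * W}) (m : U) : Prop := exists w, (m, w) \in M.
Definition woman_matched (M : {set U * W}) (w : W) : Prop := exists m, (m, w) \in M.

Definition blocks (M : {set U * W}) (m : U) (w : W) : Prop :=
  [/\ acceptable m w,
      ~ man_matched M m \/ (exists w', (m, w') \in M /\ man_prefers m w w')
    & ~ woman_matched M w \/ (exists m', (m', w) \in M /\ woman_prefers w m m')].

Definition stable (M : {set U * W}) : Prop :=
  is_matching M /\ forall m w, ~ blocks M m w.

(* ma(I): agents matched in the stable matchings of I (by the Rural Hospitals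
   theorem this set is the same for every stable matching). *)
Definition ma_man (m : U) : Prop := exists M, stable M /\ man_matched M m.
Definition ma_woman (w : W) : Prop := exists M, stable M /\ woman_matched M w.

End SMIdefs.

Definition differ_in_one_agent (U W : finType) (I1 I2 : SMI U W) : Prop :=
  (exists a : U, (forall m, m != a -> prefU I2 m = prefU I1 m) /\
                 (forall w, prefW I2 w = prefW I1 w)) \/
  (exists a : W, (forall w, w != a -> prefW I2 w = prefW I1 w) /\
                 (forall m, prefU I2 m = prefU I1 m)).

(* Main.v *)
Require Import Defs.
From mathcomp Require Import all_boot.
From mathcomp Require Import zify.
From Stdlib Require Import Classical.
Set Implicit Arguments. Unset Strict Implicit. Unset Printing Implicit Defensive.

Lemma onth_some (T : eqType) (s : seq T) n x :
  onth s n = Some x -> [/\ n < size s, nth x s n = x & x \in s].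
Proof.
move=> e; have lt : n < size s by rewrite -onthTE e.
have nx : nth x s n = x by apply: onth_nth.
by split => //; rewrite -nx mem_nth.
Qed.

Lemma index_inj (T : eqType) (s : seq T) x y :
  x \in s -> index x s = index y s -> x = y.
Proof.
move=> xs e; have ys : y \in s by rewrite -index_mem -e index_mem.
by rewrite -(nth_index x xs) e (nth_index x ys).
Qed.

Section GS.
Variables (U W : finType) (I : SMI U W) (wf : wf_SMI I).

Definition target (k : U -> nat) m : option W := onth (prefU I m) (k m).
Definition prop k w m : bool := (target k m == Some w) && (m \in prefW I w).
Definition holds k w m : bool :=
  prop k w m && [forall m', prop k w m' ==> (index m (prefW I w) <= index m' (prefW I w))].
Definition rej k m : bool := if target k m is Some w then ~~ holds k w m else false.
Definition Inv k := forall m w, w \in prefU I m -> index w (prefU I m) < k m ->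
  m \in prefW I w -> exists m', prop k w m' /\ index m' (prefW I w) < index m (prefW I w).
Definition meas k := \sum_(m : U) (size (prefU I m) - k m).
Definition Mk k : {set U * W} := [set p | target k p.1 == Some p.2].
Definition upd (k : U -> nat) m0 := fun m => if m == m0 then (k m).+1 else k m.

Lemma final k : (forall m, ~~ rej k m) -> Inv k -> stable I (Mk k).
Proof.
move=> nr iv.
have held : forall m w, target k m = Some w -> holds k w m.
  by move=> m w e; move: (nr m); rewrite /rej e negbK.
have inMk : forall m w, ((m, w) \in Mk k) = (target k m == Some w).
  by move=> m w; rewrite inE.
split; first split.
- case=> m w; rewrite inMk => /eqP e.
  have /andP[/andP[_ mw] _] := held _ _ e.
  by case: (onth_some e) => _ _ wm; rewrite /acceptable wm mw.
- by move=> m w w'; rewrite !inMk => /eqP -> /eqP [].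
- move=> m m' w; rewrite !inMk => /eqP e /eqP e'.
  have /andP[/andP[_ mw] /forallP h] := held _ _ e.
  have /andP[/andP[_ mw'] /forallP h'] := held _ _ e'.
  have p : prop k w m by rewrite /prop e eqxx mw.
  have p' : prop k w m' by rewrite /prop e' eqxx mw'.
  move: (h m') (h' m); rewrite p p' /= => l1 l2.
  by apply: (index_inj mw); apply/eqP; rewrite eqn_leq l1 l2.
move=> m w [acc hm hw].
move: acc; rewrite /acceptable => /andP[wm mw].
have lt : index w (prefU I m) < k m.
  case: hm => [nm | [w' [mw' /andP[_ l]]]].
  - case e: (target k m) => [w'|].
      by exfalso; apply: nm; exists w'; rewrite inMk e.
    move: e; rewrite /target => e.
    have : ~~ onth (prefU I m) (k m) by rewrite e.
    rewrite onthNE => le; apply: leq_trans le; by rewrite index_mem.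
  - move: mw'; rewrite inMk => /eqP e; case: (onth_some e) => l1 l2 _.
    by move: l; rewrite -l2 index_uniq //; case: wf.
have [m' [p' l']] := iv m w wm lt mw.
have hm' : holds k w m' by apply: held; move: p' => /andP[/eqP -> _].
case: hw => [nw | [m'' [m''w /andP[_ l'']]]].
  by apply: nw; exists m'; rewrite inMk; move: p' => /andP[].
move: m''w; rewrite inMk => /eqP e.
have /andP[_ /forallP h] := held _ _ e.
move: (h m'); rewrite p' /= => l3.
have := leq_ltn_trans l3 l'; have := ltn_trans l'' ; lia.
Qed.


Lemma better k m0 w0 : target k m0 = Some w0 -> ~~ holds k w0 m0 -> m0 \in prefW I w0 ->
  exists m', prop k w0 m' /\ index m' (prefW I w0) < index m0 (prefW I w0).
Proof.
move=> e nh mw; have p : prop k w0 m0 by rewrite /prop e eqxx mw.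
move: nh; rewrite /holds p /= => /forallPn [m' /=]; rewrite negb_imply => /andP[p' l].
by exists m'; split => //; rewrite ltnNge.
Qed.

Lemma prop_upd k m0 w m : m != m0 -> prop (upd k m0) w m = prop k w m.
Proof. by move=> ne; rewrite /prop /target /upd (negbTE ne). Qed.

Lemma step_inv k m0 : rej k m0 -> Inv k -> Inv (upd k m0).
Proof.
rewrite /rej; case e0: (target k m0) => [w0|] // nh iv.
have key : forall w i, (exists m', prop k w m' /\ index m' (prefW I w) < i) ->
    exists m', prop (upd k m0) w m' /\ index m' (prefW I w) < i.
  move=> w i [m' [p' l]].
  case: (eqVneq m' m0) => [em|ne]; last by exists m'; rewrite prop_upd.
  subst m'; move: (p') => /andP[/eqP]; rewrite e0 => -[ew] mw; subst w.
  have [m'' [p'' l'']] := better e0 nh mw.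
  have ne : m'' != m0 by apply/eqP => em; rewrite em ltnn in l''.
  exists m''; rewrite prop_upd //; split => //; apply: ltn_trans l''  l.
move=> m w wm lt mw; apply: key.
case: (eqVneq m m0) => [em|ne]; last first.
  by apply: iv => //; move: lt; rewrite /upd (negbTE ne).
subst m; move: lt; rewrite /upd eqxx ltnS leq_eqVlt => /orP[/eqP ei|lt].
  have [_ n0 _] := onth_some e0.
  have ew : w = w0 by rewrite -n0 -ei nth_index.
  subst w; exact: better e0 nh mw.
exact: iv.
Qed.

Lemma step_meas k m0 : rej k m0 -> meas (upd k m0) < meas k.
Proof.
rewrite /rej; case e0: (target k m0) => [w0|] // _.
have [lt _ _] := onth_some e0.
rewrite /meas (bigD1 m0) //= [X in _ < X](bigD1 m0) //=.
rewrite (eq_bigr (fun m => size (prefU I m) - k m)); last first.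
  by move=> m ne; rewrite /upd (negbTE ne).
rewrite /upd eqxx; rewrite ltn_add2r.
rewrite subnS; have : 0 < size (prefU I m0) - k m0 by rewrite subn_gt0.
by case: (_ - _).
Qed.

Lemma gs_aux n : forall k, meas k < n -> Inv k -> exists M, stable I M.
Proof.
elim: n => [//|n IH] k lt iv.
case: (pickP (rej k)) => [m0 r|nr].
  apply: (IH (upd k m0)); last exact: step_inv.
  by have := step_meas r; lia.
by exists (Mk k); apply: final => // m; rewrite nr.
Qed.

Lemma gs : exists M, stable I M.
Proof. by apply: (gs_aux (n := (meas (fun _ => 0)).+1)) => // m w _; rewrite ltn0. Qed.

End GS.

Section Core.
Variables (U W : finType) (I1 I2 : SMI U W) (M1 M2 : {set U * W}).
Hypotheses (st1 : stable I1 M1) (st2 : stable I2 M2).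
Variables (badU : pred U) (badW : pred W).
Hypotheses (trU : forall m, ~~ badU m -> prefU I2 m = prefU I1 m)
           (trW : forall w, ~~ badW w -> prefW I2 w = prefW I1 w).

Definition Hc m w := ~ man_matched M1 m \/
  exists w', (m, w') \in M1 /\ man_prefers I1 m w w'.

Lemma f1 m w w' : (m, w) \in M1 -> (m, w') \in M1 -> w = w'.
Proof. by case: st1 => -[_ f _] _; apply: f. Qed.
Lemma g1 m m' w : (m, w) \in M1 -> (m', w) \in M1 -> m = m'.
Proof. by case: st1 => -[_ _ f] _; apply: f. Qed.
Lemma f2 m w w' : (m, w) \in M2 -> (m, w') \in M2 -> w = w'.
Proof. by case: st2 => -[_ f _] _; apply: f. Qed.
Lemma g2 m m' w : (m, w) \in M2 -> (m', w) \in M2 -> m = m'.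
Proof. by case: st2 => -[_ _ f] _; apply: f. Qed.

Lemma cstep m w : (m, w) \in M2 -> Hc m w -> ~~ badU m -> ~~ badW w ->
  exists m', (m', w) \in M1 /\ (~~ badU m' -> exists w', (m', w') \in M2 /\ Hc m' w').
Proof.
move=> mw H bm bw.
case: st1 => -[acc1 _ _] nb1; case: st2 => -[acc2 _ _] nb2.
have a1 : acceptable I1 m w.
  by move: (acc2 _ mw); rewrite /acceptable /= trU // trW.
case: (pickP (fun m' => (m', w) \in M1)) => [m' m'w | none]; last first.
  by exfalso; apply: (nb1 m w); split => //; left => -[x]; rewrite none.
exists m'; split => // bm'.
have ne : m' != m.
  apply/eqP => e; subst m'; case: H => [nm|[w' [mw' /andP[_ l]]]].
    by apply: nm; exists w.
  by rewrite (f1 m'w mw') ltnn in l.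
have a1' := acc1 _ m'w; move: a1 a1' => /andP[wm mw1] /andP[_ mw1'] /=.
have wp1 : woman_prefers I1 w m' m.
  rewrite /woman_prefers mw1' /= ltn_neqAle; apply/andP; split.
    by apply: contra ne => /eqP e; apply/eqP; apply: index_inj mw1' e.
  rewrite leqNgt; apply/negP => l; apply: (nb1 m w); split => //.
    by rewrite /acceptable wm mw1.
  by right; exists m'; split => //; rewrite /woman_prefers mw1.
have wp2 : woman_prefers I2 w m' m by rewrite /woman_prefers trW.
have a2' : acceptable I2 m' w.
  by rewrite /acceptable trU // trW //; apply: acc1 m'w.
case: (pickP (fun w' => (m', w') \in M2)) => [w' m'w' | none2]; last first.
  exfalso; apply: (nb2 m' w); split => //.
    by apply: or_introl => -[x]; move: (none2 x) => /= ->.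
  by right; exists m.
exists w'; split => //; right; exists w; split => //.
have nw : w' != w by apply: contra ne => /eqP e; subst w'; apply/eqP; apply: g2 m'w' mw.
have a2w' := acc2 _ m'w'; have a2c := a2'; move: a2w' a2c => /andP[w'm _] /andP[wm2 _] /=.
have : man_prefers I2 m' w' w.
  rewrite /man_prefers w'm /= ltn_neqAle; apply/andP; split.
    by apply: contra nw => /eqP e; apply/eqP; apply: index_inj w'm e.
  rewrite leqNgt; apply/negP => l; apply: (nb2 m' w); split => //.
    by right; exists w'; split => //; rewrite /man_prefers wm2.
  by right; exists m.
by rewrite /man_prefers trU.
Qed.

Definition gn (m : U) : option U :=
  if [pick w | (m, w) \in M2] is Some w then [pick m' | (m', w) \in M1] else None.

Lemma gnP m m' : gn m = Some m' <-> exists w, (m, w) \in M2 /\ (m', w) \in M1.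
Proof.
split.
  rewrite /gn; case: pickP => // w mw; case: pickP => // x xw [<-].
  by exists w.
move=> [w [mw m'w]]; rewrite /gn; case: pickP => [w0 mw0|/(_ w)]; last by rewrite mw.
rewrite (f2 mw0 mw); case: pickP => [x xw | /(_ m')]; last by rewrite m'w.
by rewrite (g1 xw m'w).
Qed.

Lemma gn_inj u v z : gn u = Some z -> gn v = Some z -> u = v.
Proof.
move=> /gnP [w [uw zw]] /gnP [w' [vw' zw']].
rewrite (f1 zw zw') in uw; exact: g2 uw vw'.
Qed.

Definition orb x n := iter n (obind gn) (Some x).

Lemma orb_det x y j : forall k z, orb x j = Some z -> orb y k = Some z -> j <= k ->
  orb y (k - j) = Some x.
Proof.
elim: j => [|j IH] k z.
  by rewrite subn0 => -[<-].
rewrite /orb /= => ex; case: k => // k ey le.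
move: ex ey; case ex: (iter j _ _) => [u|] //= gu.
case ey: (iter k _ _) => [v|] //= gv.
rewrite (gn_inj gu gv) in ex.
by rewrite subSS; apply: (IH k v).
Qed.

Lemma no_pre m x : ~ man_matched M1 m -> gn x = Some m -> False.
Proof. by move=> nm /gnP [w [_ mw]]; apply: nm; exists w. Qed.

Lemma orb_inj x i j z : ~ man_matched M1 x -> orb x i = Some z -> orb x j = Some z ->
  i <= j -> i = j.
Proof.
move=> nm ei ej le; have := orb_det ei ej le.
case e: (j - i) => [|d].
  by move=> _; lia.
rewrite /orb /=; case: (iter d _ _) => [u|] //= gu; case: (no_pre nm gu).
Qed.

Definition Bad p := badU p || [exists w, ((p, w) \in M2) && badW w].

Lemma claim m1 w1 : ~ man_matched M1 m1 -> (m1, w1) \in M2 -> forall n,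
  (exists j p, j <= n /\ orb m1 j = Some p /\ Bad p) \/
  (exists p w, orb m1 n = Some p /\ (p, w) \in M2 /\ Hc p w).
Proof.
move=> nm mw; elim=> [|n [[j [p [le [e b]]]]|[p [w [e [pw H]]]]]].
- by right; exists m1, w1; split => //; split => //; left.
- by left; exists j, p; split => //; apply: leqW.
case bp: (Bad p).
  by left; exists n, p; split.
move/negbT: bp; rewrite /Bad negb_or => /andP [bu /existsPn bw].
have bw' : ~~ badW w by move: (bw w); rewrite pw.
have [m' [m'w cont]] := cstep pw H bu bw'.
have go : orb m1 n.+1 = Some m' by rewrite /orb /= -/(orb m1 n) e /=; apply/gnP; exists w.
case bm': (badU m').
  by left; exists n.+1, m'; split => //; split => //; rewrite /Bad bm'.
have [w' [m'w' H']] := cont (negbT bm').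
by right; exists m', w'.
Qed.

Lemma reach_bad m1 : ~ man_matched M1 m1 -> man_matched M2 m1 ->
  exists j p, orb m1 j = Some p /\ Bad p.
Proof.
move=> nm [w1 mw]; apply: NNPP => nb.
have all : forall n, exists p, orb m1 n = Some p.
  move=> n; case: (claim nm mw n) => [[j [p [_ [e b]]]]|[p [w [e _]]]].
    by exfalso; apply: nb; exists j, p.
  by exists p.
pose f (i : 'I_(#|U|.+1)) := odflt m1 (orb m1 i).
have finj : injective f.
  move=> i j; rewrite /f.
  have [p ep] := all i; have [q eq] := all j; rewrite ep eq /= => epq; subst q.
  apply: val_inj => /=.
  case: (leqP i j) => le; first exact: orb_inj nm ep eq le.
  by symmetry; apply: orb_inj nm eq ep (ltnW le).
by have := leq_card f finj; rewrite card_ord ltnn.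
Qed.

Lemma core m1 m2 : ~ man_matched M1 m1 -> man_matched M2 m1 ->
  ~ man_matched M1 m2 -> man_matched M2 m2 ->
  (forall p q, Bad p -> Bad q -> p = q) -> m1 = m2.
Proof.
move=> n1 y1 n2 y2 hb.
have [j1 [p1 [e1 b1]]] := reach_bad n1 y1.
have [j2 [p2 [e2 b2]]] := reach_bad n2 y2.
rewrite -(hb _ _ b1 b2) in e2.
have gen : forall a b ja jb, ~ man_matched M1 a -> orb a ja = Some p1 ->
    orb b jb = Some p1 -> ja <= jb -> a = b.
  move=> a b ja jb na ea eb le; have := orb_det ea eb le.
  case: (jb - ja) => [|d]; first by case.
  rewrite /orb /=; case: (iter d _ _) => [u|] //= gu; case: (no_pre na gu).
case: (leqP j1 j2) => le; first exact: gen n1 e1 e2 le.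
by symmetry; apply: gen n2 e2 e1 (ltnW le).
Qed.

Lemma rural m : (forall p, ~~ Bad p) -> ~ man_matched M1 m -> man_matched M2 m -> False.
Proof. by move=> nb n y; have [j [p [_ b]]] := reach_bad n y; move: (nb p); rewrite b. Qed.

End Core.

Lemma men_part (U W : finType) (I' Ia : SMI U W) : wf_SMI I' -> differ_in_one_agent I' Ia ->
  forall m1 m2 : U,
      ~ ma_man I' m1 -> ma_man Ia m1 ->
      ~ ma_man I' m2 -> ma_man Ia m2 -> m1 = m2.
Proof.
move=> wf dif m1 m2 n1 [Ma [sa y1]] n2 [Mb [sb y2]].
have [M' s'] := gs wf.
have nm1 : ~ man_matched M' m1 by move=> h; apply: n1; exists M'.
have nm2 : ~ man_matched M' m2 by move=> h; apply: n2; exists M'.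
have y2' : man_matched Ma m2.
  apply: NNPP => h.
  apply: (@rural _ _ Ia Ia Ma Mb sa sb pred0 pred0 (fun _ _ => erefl) (fun _ _ => erefl) m2 _ h y2).
  by move=> p; rewrite /Bad /=; apply/existsPn => w; rewrite andbF.
case: dif => [[a [hU hW]] | [a [hW hU]]].
- apply: (@core _ _ I' Ia M' Ma s' sa (fun m => m == a) pred0 hU (fun w _ => hW w)) => //.
  move=> p q; rewrite /Bad /=.
  have nx : forall r, [exists w, ((r, w) \in Ma) && false] = false.
    by move=> r; apply/existsPn => w; rewrite andbF.
  by rewrite !nx !orbF => /eqP -> /eqP ->.
- apply: (@core _ _ I' Ia M' Ma s' sa pred0 (fun w => w == a) (fun m _ => hU m) hW) => //.
  move=> p q; rewrite /Bad /= => /existsP [w /andP [pw /eqP ew]] /existsP [w' /andP [qw /eqP ew']].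
  subst w w'; case: sa => -[_ _ g] _; exact: g pw qw.
Qed.

Definition swapI (U W : finType) (I : SMI U W) : SMI W U := mkSMI (prefW I) (prefU I).
Definition swapM (A B : finType) (M : {set A * B}) : {set B * A} := [set p | (p.2, p.1) \in M].

Lemma swapIK (U W : finType) (I : SMI U W) : swapI (swapI I) = I.
Proof. by case: I. Qed.

Lemma in_swapM (A B : finType) (M : {set A * B}) a b : ((b, a) \in swapM M) = ((a, b) \in M).
Proof. by rewrite inE. Qed.

Lemma stable_swap (U W : finType) (I : SMI U W) M : stable I M -> stable (swapI I) (swapM M).
Proof.
move=> [[acc f g] nb]; split; first split.
- case=> w m; rewrite in_swapM => /acc; rewrite /acceptable /= andbC //.
- by move=> w m m'; rewrite !in_swapM => h1 h2; apply: g h1 h2.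
- by move=> w w' m; rewrite !in_swapM => h1 h2; apply: f h1 h2.
move=> w m [a hw hm]; apply: (nb m w); split.
- by move: a; rewrite /acceptable /= andbC.
- case: hm => [nm|[w' [mw' p]]].
    by left => -[x mx]; apply: nm; exists x; rewrite in_swapM.
  by right; exists w'; split => //; rewrite -in_swapM.
- case: hw => [nw|[m' [m'w p]]].
    by left => -[x xw]; apply: nw; exists x; rewrite in_swapM.
  by right; exists m'; split => //; rewrite -in_swapM.
Qed.

Lemma ma_swap (U W : finType) (I : SMI U W) w : ma_woman I w <-> ma_man (swapI I) w.
Proof.
split.
  by move=> [M [s [m mw]]]; exists (swapM M); split; [apply: stable_swap | exists m; rewrite in_swapM].
move=> [M [s [m mw]]]; exists (swapM M); split.
  by rewrite -(swapIK I); apply: stable_swap.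
by exists m; rewrite in_swapM.
Qed.

Theorem mainTheorem9 (U W : finType) (I' Ia : SMI U W) :
  wf_SMI I' -> wf_SMI Ia -> differ_in_one_agent I' Ia ->
  (forall m1 m2 : U,
      ~ ma_man I' m1 -> ma_man Ia m1 ->
      ~ ma_man I' m2 -> ma_man Ia m2 -> m1 = m2) /\
  (forall w1 w2 : W,
      ~ ma_woman I' w1 -> ma_woman Ia w1 ->
      ~ ma_woman I' w2 -> ma_woman Ia w2 -> w1 = w2).
Proof.
move=> wf' wfa dif; split; first exact: men_part.
move=> w1 w2 n1 y1 n2 y2.
apply: (@men_part _ _ (swapI I') (swapI Ia)).
- by case: wf' => h1 h2; split.
- by case: dif => [[a [h1 h2]]|[a [h1 h2]]]; [right|left]; exists a; split.
- by rewrite -ma_swap.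
- by rewrite -ma_swap.
- by rewrite -ma_swap.
- by rewrite -ma_swap.
Qed.
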